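(* Let $q$ be a power of a prime $p$. Let $a,d$ be positive integers and $s\ge1$ such that $L=\{a,a+d,\ldots,a+(s-1)d\}\subseteq[q-1]$. Let $\mathcal{F}\subseteq 2^{[n]}$ be $q$-modular $L$-differencing Sperner. If $$\sum_{\ell\in L}v_p(\ell)<\max\{(s-1)v_p(d)+v_p(q),\; s\,v_p(d)+v_p(s!)+1\},$$ then $|\mathcal{F}|\le\sum_{i=0}^{s}\binom{n}{i}$.
   Context: $[n]=\{1,\ldots,n\}$, $[q-1]=\{1,\ldots,q-1\}$, and $2^{[n]}$ is the family of all subsets of $[n]$. For a prime $p$ and integer $m$, $v_p(m)$ is the largest nonnegative integer $k$ with $p^k\mid m$ ($v_p(0)=+\infty$). For a positive integer $m$ and $L\subseteq\mathbb{Z}$, write $r\in L\pmod m$ if $r\equiv\ell\pmod m$ for some $\ell\in L$. For $L\subseteq[q-1]$, a family $\mathcal{F}\subseteq 2^{[n]}$ is $q$-modular $L$-differencing Sperner if $|A\setminus B|\in L\pmod q$ for all distinct $A,B\in\mathcal{F}$. *)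

(* Defs.v *)
From mathcomp Require Import all_boot.
Set Implicit Arguments. Unset Strict Implicit. Unset Printing Implicit Defensive.

Definition vp (p m : nat) : nat := logn p m.

Definition arith_prog (a d s : nat) : seq nat := [seq a + i * d | i <- iota 0 s].

Definition in_mod (r : nat) (L : seq nat) (m : nat) : bool :=
  has (fun l => r == l %[mod m]) L.

Definition mod_L_diff_sperner (n q : nat) (L : seq nat) (F : {set {set 'I_n}}) : Prop :=
  forall A B, A \in F -> B \in F -> A != B -> in_mod #|A :\: B| L q.

(* Main.v *)
Require Import Defs.
From mathcomp Require Import all_boot all_algebra.
From mathcomp Require Import cyclic zify.
Set Implicit Arguments. Unset Strict Implicit. Unset Printing Implicit Defensive.

Lemma bin_mult_dvd p N c s : prime p -> 0 < s -> s < p ^ N -> p %| 'C(c * p ^ N, s).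
Proof.
move=> pp s0 sN.
case: s s0 sN => // s _ sN.
case: N sN => [|N] sN; first by rewrite expn0 in sN.
have H := mul_bin_diag (c * p ^ N.+1) s.
apply/negPn/negP => ndiv.
have cop : coprime (p ^ N.+1) 'C(c * p ^ N.+1, s.+1).
  by rewrite coprime_pexpl // prime_coprime.
have : p ^ N.+1 %| s.+1 * 'C(c * p ^ N.+1, s.+1).
  by rewrite -H dvdn_mulr // dvdn_mull.
rewrite Gauss_dvdl // => /dvdn_leq. lia.
Qed.

Lemma lucas_lite p N c r s : prime p -> r < s -> s < p ^ N -> p %| 'C(c * p ^ N + r, s).
Proof.
move=> pp; elim: r s => [|r IH] s rs sN.
  by rewrite addn0 bin_mult_dvd.
case: s rs sN => // s rs sN.
rewrite addnS binS dvdn_add // IH //; lia.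
Qed.

Lemma prod_congr_mod P s (f g : nat -> nat) :
  (forall i, i < s -> f i = g i %[mod P]) ->
  \prod_(i < s) f i = \prod_(i < s) g i %[mod P].
Proof.
move=> H.
apply: (big_ind2 (fun a b => a = b %[mod P])) => //.
  by move=> x1 x2 y1 y2 e1 e2; rewrite -modnMm e1 e2 modnMm.
by move=> i _; apply: H.
Qed.

Lemma ap_prod p N d' y j s : prime p -> coprime d' p -> j < s -> s < p ^ N ->
  y = j * d' %[mod p ^ N] -> (s - 1) * d' <= y ->
  p ^ (logn p s`! + 1) %| \prod_(i < s) (y - i * d').
Proof.
move=> pp cop js sN yj sy.
set w := logn p s`! + 1.
set P := p ^ (N + w).
have p0 : 0 < p by apply: prime_gt0.
have P0 : 0 < P by rewrite expn_gt0 p0.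
have copP : coprime d' P by rewrite coprime_pexpr ?addn_gt0 ?addn1 ?orbT.
set u := d' ^ (totient P).-1.
have ud : u * d' = 1 %[mod P].
  by rewrite -expnSr prednK ?totient_gt0 // Euler_exp_totient.
set z := u * y + s * P.
have cong i : i < s -> d' * (z - i) = y - i * d' %[mod P].
  move=> iS.
  have izle : i <= z.
    have : s <= s * P by rewrite leq_pmulr.
    rewrite /z; lia.
  have idy : i * d' <= y.
    by apply: leq_trans sy; rewrite leq_mul2r; apply/orP; right; lia.
  have dz : d' * z = y %[mod P].
    by rewrite /z mulnDr (mulnA d' s P) addnC modnMDl mulnA (mulnC d' u) -modnMml ud modnMml mul1n.
  apply/eqP; rewrite -(eqn_modDr (d' * i)) mulnBr subnK ?leq_mul2l ?izle ?orbT //.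
  by rewrite (mulnC d' i) subnK // dz.
have LHS : p ^ w %| \prod_(i < s) (d' * (z - i)).
  rewrite big_split /= prod_nat_const card_ord -ffact_prod -bin_ffact.
  apply: dvdn_mull.
  rewrite /w expnD expn1 mulnC dvdn_mul ?pfactor_dvdnn //.
  have zj : z = j %[mod p ^ N].
    have dPN : p ^ N %| P by rewrite /P expnD dvdn_mulr.
    have sP : s * P = (s * p ^ w) * p ^ N by rewrite /P expnD mulnA mulnAC.
    rewrite /z sP addnC modnMDl.
    rewrite -modnMmr yj modnMmr mulnA (mulnC u j) -mulnA -modnMmr.
    by rewrite -(modn_dvdm (u * d') dPN) ud (modn_dvdm 1 dPN) modnMmr muln1.
  have jN : j < p ^ N by apply: ltn_trans sN.
  rewrite (divn_eq z (p ^ N)) lucas_lite // zj modn_small //.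
have dwP : p ^ w %| P by rewrite /P expnD dvdn_mull.
move: LHS; rewrite /dvdn -(modn_dvdm (\prod_(i < s) (y - i * d')) dwP).
by rewrite -(prod_congr_mod cong) (modn_dvdm _ dwP).
Qed.

Lemma dvdn_prod_pow (I : finType) (P : pred I) m (f : I -> nat) :
  (forall i, P i -> m %| f i) -> m ^ #|P| %| \prod_(i | P i) f i.
Proof.
move=> H; rewrite -prod_nat_const.
by apply: (big_ind2 (fun x y => x %| y)) => // x1 x2 y1 y2; apply: dvdn_mul.
Qed.

Lemma core p k q a d s j t : prime p -> 0 < k -> q = p ^ k -> 0 < a -> 0 < d -> 1 <= s ->
  a + (s - 1) * d <= q - 1 -> j < s -> 0 < t ->
  \sum_(i < s) logn p (a + i * d) <
     maxn ((s - 1) * logn p d + k) (s * logn p d + logn p s`! + 1) ->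
  p ^ (\sum_(i < s) logn p (a + i * d)).+1 %| \prod_(i < s) (a + j * d + t * q - (a + i * d)).
Proof.
move=> pp k0 qE a0 d0 s1 last js t0 Vlt.
set V := \sum_(i < s) logn p (a + i * d) in Vlt *.
set e := logn p d in Vlt *.
have p1 : 1 < p by apply: prime_gt1.
have p0 : 0 < p by apply: prime_gt0.
set d' := d %/ p ^ e.
have hd : d = d' * p ^ e by rewrite divnK // pfactor_dvdnn.
have copd : coprime d' p.
  rewrite coprime_sym prime_coprime //; apply/negP => pd'.
  have : p ^ e.+1 %| d by rewrite hd expnS dvdn_pmul2r ?expn_gt0 ?p0.
  by rewrite pfactor_dvdn // ltnn.
have d'0 : 0 < d' by move: d0; rewrite hd muln_gt0 => /andP[].
have eqF : forall i, a + j * d + t * q - (a + i * d) = j * d + t * q - i * d.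
  by move=> i; rewrite -addnA subnDl.
under eq_bigr do rewrite eqF.
have ek : forall i : 'I_s, i != Ordinal js -> e < k.
  move=> i ij.
  have s2 : 2 <= s.
    case: i ij => /= i ilt ij; apply: contraNT ij; rewrite -ltnNge => sl.
    apply/eqP/val_inj => /=; lia.
  have dq : d < p ^ k.
    rewrite -qE; have : d <= (s - 1) * d by rewrite leq_pmull //; lia.
    lia.
  have : p ^ e < p ^ k by apply: leq_ltn_trans dq; apply: dvdn_leq d0 (pfactor_dvdnn _ _).
  by rewrite ltn_exp2l.
have pek : forall i : 'I_s, i != Ordinal js -> p ^ e %| j * d + t * q - i * d.
  move=> i ij.
  have dq : p ^ e %| q by rewrite qE dvdn_exp2l // ltnW // (ek i ij).
  have dd : p ^ e %| d by apply: pfactor_dvdnn.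
  by rewrite dvdn_sub // ?dvdn_add // dvdn_mull.
case: (ltnP V ((s - 1) * e + k)) => [VA | VB].
  apply: (@dvdn_trans (p ^ ((s - 1) * e + k))); first by rewrite dvdn_exp2l.
  rewrite (bigD1 (Ordinal js)) //= expnD [X in X %| _]mulnC dvdn_mul //.
    by rewrite addKn qE dvdn_mull.
  have := dvdn_prod_pow pek.
  by rewrite cardC1 card_ord -expnM mulnC subn1.
have VB' : V < s * e + logn p s`! + 1.
  by move: Vlt; rewrite leq_max => /orP[h|//]; lia.
have s2 : 2 <= s.
  rewrite ltnNge; apply/negP => s1'.
  have sE : s = 1 by lia.
  move: VB; rewrite /V sE big_ord1 /= mul0n addn0 subnn mul0n add0n.
  rewrite -(pfactor_dvdn _ pp a0) => /dvdn_leq => /(_ a0).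
  move: last; rewrite sE subnn mul0n addn0 qE; lia.
have ek' : e < k.
  have j1 : (if j == 0 then 1 else 0) < s by case: (j == 0); lia.
  apply: (ek (Ordinal j1)); apply/eqP => /(congr1 val) /=; case: (j =P 0); lia.
set N := k - e.
have qN : q = p ^ e * p ^ N by rewrite qE -expnD /N subnKC // ltnW.
have N1 : 0 < N by rewrite /N subn_gt0.
have pN2 : 2 <= p ^ N by apply: leq_trans p1 _; rewrite -{1}(expn1 p) leq_pexp2l.
have pe1 : 0 < p ^ e by rewrite expn_gt0 p0.
have sN : s < p ^ N.
  rewrite ltnNge; apply/negP => Ns.
  have lst : (s - 1) * d' * p ^ e + a <= p ^ e * p ^ N - 1.
    by move: last; rewrite qN hd mulnA; lia.
  have d'1 : d' = 1.
    apply/eqP; rewrite eqn_leq d'0 andbT leqNgt; apply/negP => d'2.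
    have h1 : (p ^ N - 1) * 2 <= (s - 1) * d'.
      by apply: leq_mul => //; lia.
    have h2 : (p ^ N - 1) * 2 * p ^ e <= (s - 1) * d' * p ^ e by rewrite leq_mul2r h1 orbT.
    have h3 : p ^ e * p ^ N <= (p ^ N - 1) * 2 * p ^ e.
      rewrite [p ^ e * _]mulnC leq_mul2r; apply/orP; right; lia.
    lia.
  have aE : a < p ^ e.
    move: lst; rewrite d'1 muln1.
    have : (p ^ N - 1) * p ^ e <= (s - 1) * p ^ e by rewrite leq_mul2r; apply/orP; right; lia.
    rewrite mulnBl mul1n mulnC; lia.
  have e1 : 0 < e by move: aE; case: (posnP e) => [->|//]; rewrite expn0; lia.
  have Vle : V + s <= s * e.
    have H : \sum_(i < s) (logn p (a + i * d) + 1) <= \sum_(i < s) e.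
      apply: leq_sum => i _; rewrite addn1 ltnNge; apply/negP.
      rewrite -pfactor_dvdn // ?addn_gt0 ?a0 // => dv.
      have dd : p ^ e %| i * d by rewrite hd mulnA dvdn_mull.
      have : p ^ e %| a by rewrite -(dvdn_addl _ dd).
      by move/dvdn_leq => /(_ a0); lia.
    by move: H; rewrite big_split /= !sum_nat_const card_ord muln1.
  move: VB; rewrite mulnBl mul1n.
  have : e <= s * e by rewrite leq_pmull; lia.
  lia.
set y := j * d' + t * p ^ N.
have sd' : (s - 1) * d' < p ^ N.
  rewrite -(ltn_pmul2r pe1) -mulnA -hd [p ^ N * _]mulnC -qN.
  by move: last; lia.
have AP := @ap_prod p N d' y j s pp copd js sN.
have yj : y = j * d' %[mod p ^ N] by rewrite /y addnC modnMDl.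
have sy : (s - 1) * d' <= y.
  apply: ltnW; apply: (leq_trans sd'); rewrite /y.
  by apply: leq_trans (leq_addl _ _); rewrite leq_pmull.
have {}AP := AP yj sy.
have eqG : forall i : 'I_s, j * d + t * q - i * d = p ^ e * (y - i * d').
  move=> i; rewrite mulnBr /y mulnDr qN hd.
  congr (_ - _); [congr (_ + _)|]; lia.
under eq_bigr do rewrite eqG.
rewrite big_split /= prod_nat_const card_ord -expnM.
apply: (@dvdn_trans (p ^ (e * s) * p ^ (logn p s`! + 1))).
  by rewrite -expnD dvdn_exp2l //; lia.
by rewrite dvdn_mul.
Qed.

Section Lin.
Import GRing.Theory.
Local Open Scope ring_scope.
Local Notation FT n := {ffun {set 'I_n} -> rat^o}.

Definition eS n (Z : {set 'I_n}) : FT n := [ffun x => ((Z :&: x) == set0)%:R].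
Definition Ys n r : seq (FT n) := [seq eS Z | Z <- enum [set Z : {set 'I_n} | (#|Z| <= r)%N]].
Definition hprod n (f g : FT n) : FT n := [ffun x => f x * g x].

Lemma eS_in n r (Z : {set 'I_n}) : (#|Z| <= r)%N -> eS Z \in <<Ys n r>>%VS.
Proof. by move=> h; apply: memv_span; apply: map_f; rewrite mem_enum inE. Qed.

Lemma Ys_mono n r : (<<Ys n r>> <= <<Ys n r.+1>>)%VS.
Proof.
apply/span_subvP => f /mapP [Z]; rewrite mem_enum inE => h ->.
by apply: eS_in; apply: leq_trans h _.
Qed.

Lemma hprod_eS n (Z T0 : {set 'I_n}) : hprod (eS Z) (eS T0) = eS (Z :|: T0).
Proof.
apply/ffunP => x; rewrite !ffunE setIUl setU_eq0.
by case: (Z :&: x == set0); case: (T0 :&: x == set0); rewrite ?mulr1 ?mulr0 ?mul0r.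
Qed.

Lemma hprod_suml n I (r : seq I) (c : I -> rat) (f : I -> FT n) g :
  hprod (\sum_(i <- r) c i *: f i) g = \sum_(i <- r) c i *: hprod (f i) g.
Proof.
apply/ffunP => x; rewrite !ffunE !sum_ffunE mulr_suml.
by apply: eq_bigr => i _; rewrite !ffunE scalerAl.
Qed.

Lemma hprod_step n r (u : FT n) i : u \in <<Ys n r>>%VS ->
  hprod u (eS [set i]) \in <<Ys n r.+1>>%VS.
Proof.
move=> /coord_span ->; rewrite hprod_suml.
apply: memv_suml => k _; apply: memvZ.
have -> : (map_tuple [eta eS (n:=n)] (enum_tuple [set Z : {set 'I_n} | (#|Z| <= r)%N]))`_k = nth 0 (Ys n r) k by [].
have : nth 0 (Ys n r) k \in Ys n r by apply: mem_nth; rewrite /Ys size_map -cardE.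
move=> /mapP [Z]; rewrite mem_enum inE => h ->.
rewrite hprod_eS; apply: eS_in.
by rewrite setUC cardsU1; case: (i \in Z) => /=; rewrite ?add0n ?add1n ?ltnS // (leq_trans h).
Qed.

Definition fA n (A : {set 'I_n}) (L : seq nat) : FT n :=
  [ffun x => \prod_(l <- L) ((#|A :\: x|)%:R - l%:R)].

Lemma card_setD_sum n (A x : {set 'I_n}) :
  #|A :\: x| = (\sum_(i in A) (i \notin x))%N.
Proof.
rewrite -sum1_card [LHS]big_mkcond [RHS]big_mkcond /=.
by apply: eq_bigr => i _; rewrite in_setD; case: (i \in A); case: (i \in x).
Qed.

Lemma fA_in n (A : {set 'I_n}) L : fA A L \in <<Ys n (size L)>>%VS.
Proof.
elim: L => [|l L IH].
  have -> : fA A [::] = eS set0.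
    by apply/ffunP => x; rewrite !ffunE big_nil set0I eqxx.
  by apply: eS_in; rewrite cards0.
have -> : fA A (l :: L) = \sum_(i in A) hprod (fA A L) (eS [set i]) - l%:R *: fA A L.
  apply/ffunP => x; rewrite !ffunE big_cons sum_ffunE mulrBl.
  congr (_ - _).
  rewrite mulrC; set P := \prod_(_ <- _) _.
  rewrite card_setD_sum natr_sum mulr_sumr; apply: eq_bigr => i _.
  by rewrite !ffunE setI_eq0 disjoints1.
rewrite /=; apply: memvB.
  by apply: memv_suml => i _; apply: hprod_step.
by apply: memvZ; apply: (subvP (Ys_mono n (size L))).
Qed.

Lemma card_small n s : #|[set Z : {set 'I_n} | (#|Z| <= s)%N]| = (\sum_(0 <= i < s.+1) 'C(n, i))%N.
Proof.
elim: s => [|s IH].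
  rewrite big_nat1; have := card_draws 'I_n 0; rewrite card_ord => <-.
  by apply: eq_card => Z; rewrite !inE leqn0.
rewrite big_nat_recr //= -IH; have := card_draws 'I_n s.+1; rewrite card_ord => <-.
rewrite -cardsUI.
have -> : [set Z : {set 'I_n} | (#|Z| <= s)%N] :&: [set Z : {set 'I_n} | #|Z| == s.+1] = set0.
  by apply/setP => Z; rewrite !inE; case: eqP => [->|]; rewrite ?ltnn ?andbF.
rewrite cards0 addn0; apply: eq_card => Z; rewrite !inE leq_eqVlt ltnS orbC.
by [].
Qed.

End Lin.
Section Det.
Import GRing.Theory.
Local Open Scope ring_scope.

Lemma Fp_intr_eq0 p (z : int) : prime p -> ((z%:~R : 'F_p) == 0) = (p %| z)%Z.
Proof.
move=> pp.
rewrite {1}(intEsign z) rmorphM rmorph_sign /= mulf_eq0 signr_eq0 /=.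
rewrite -[(p %| z)%Z]/(p %| `|z|)%N -pmulrn.
by rewrite (dvdn_pcharf (pchar_Fp pp)).
Qed.


Definition ent n (L : seq nat) (A B : {set 'I_n}) : int :=
  \prod_(l <- L) ((#|A :\: B|)%:Z - l%:Z).

Lemma det_nonzero p V m (Nz : 'M[int]_m) : prime p ->
  (forall i, ((p ^ V)%N%:Z %| Nz i i)%Z && ~~ ((p ^ V.+1)%N%:Z %| Nz i i)%Z) ->
  (forall i j, i != j -> ((p ^ V.+1)%N%:Z %| Nz i j)%Z) ->
  \det Nz != 0.
Proof.
move=> pp hd ho.
have pV0 : ((p ^ V)%N%:Z != 0).
  have : (0 < p ^ V)%N by rewrite expn_gt0 prime_gt0.
  by case: (p ^ V)%N.
have dv i j : ((p ^ V)%N%:Z %| Nz i j)%Z.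
  case: (eqVneq i j) => [->|ij]; first by case/andP: (hd j).
  apply: (dvdz_trans _ (ho _ _ ij)); by rewrite unfold_in /= dvdn_exp2l.
set Nd := \matrix_(i, j) (Nz i j %/ (p ^ V)%N%:Z)%Z.
have NzE : Nz = (p ^ V)%N%:Z *: Nd.
  apply/matrixP => i j; rewrite !mxE; apply/esym; rewrite (mulrC ((p ^ V)%N%:Z)) divzK //.
have key i j : (p%:Z %| Nd i j)%Z = ((p ^ V.+1)%N%:Z %| Nz i j)%Z.
  rewrite NzE !mxE expnS PoszM (mulrC ((p ^ V)%N%:Z) (_ %/ _)%Z).
  by rewrite dvdz_mul2r.
rewrite NzE detZ mulf_neq0 ?expf_neq0 //.
apply/negP => /eqP d0.
have : (\det Nd)%:~R == 0 :> 'F_p by rewrite d0.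
rewrite -det_map_mx.
have -> : map_mx intr Nd = diag_mx (\row_i ((Nd i i)%:~R : 'F_p)).
  apply/matrixP => i j; rewrite !mxE.
  case: (eqVneq i j) => [->|ij]; first by rewrite mulr1n.
  rewrite mulr0n; apply/eqP; move: (key i j); rewrite ho // !mxE => k.
  by rewrite Fp_intr_eq0.
rewrite det_diag; apply/negP; apply/prodf_neq0 => i _.
by rewrite mxE Fp_intr_eq0 // key; case/andP: (hd i).
Qed.

Lemma indep_bound n (F : {set {set 'I_n}}) (L : seq nat) p V : prime p ->
  (forall A, A \in F -> ((p ^ V)%N%:Z %| ent L A A)%Z && ~~ ((p ^ V.+1)%N%:Z %| ent L A A)%Z) ->
  (forall A B, A \in F -> B \in F -> A != B -> ((p ^ V.+1)%N%:Z %| ent L A B)%Z) ->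
  (#|F| <= \dim <<Ys n (size L)>>)%N.
Proof.
move=> pp hd ho.
set G := fun j : nat => nth set0 (enum F) j.
set X := mkseq (fun j => fA (G j) L) #|F|.
have sX : size X = #|F| by rewrite size_mkseq.
have GF j : (j < #|F|)%N -> G j \in F.
  by move=> jF; rewrite -mem_enum mem_nth // -cardE.
have Ginj i j : (i < #|F|)%N -> (j < #|F|)%N -> i != j -> G i != G j.
  by move=> iF jF ij; rewrite /G nth_uniq ?enum_uniq -?cardE.
have sub : (<<X>> <= <<Ys n (size L)>>)%VS.
  by apply/span_subvP => f /mapP [j _ ->]; apply: fA_in.
have fr : free X.
  apply/(@freeP _ _ _ (in_tuple X)) => k hk i.
  set Nz : 'M[int]_(size X) := \matrix_(i0, j0) ent L (G i0) (G j0).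
  have dNz : \det Nz != 0.
    apply: (det_nonzero (p := p) (V := V)) => //.
      by move=> i0; rewrite !mxE; apply: hd; apply: GF; rewrite -sX.
    move=> i0 j0 ij; rewrite !mxE; apply: ho; try apply: GF; rewrite -?sX //.
    by apply: Ginj; rewrite -?sX.
  have uN : map_mx (intr : int -> rat) Nz \in unitmx.
    by rewrite unitmxE det_map_mx unitfE intr_eq0.
  have key : \row_i0 k i0 *m map_mx (intr : int -> rat) Nz = 0.
    apply/rowP => j; rewrite !mxE.
    have hj := congr1 (fun f : {ffun {set 'I_n} -> rat^o} => f (G j)) hk.
    rewrite /= sum_ffunE ffunE in hj.
    apply: (etrans _ hj); apply: eq_bigr => i0 _; rewrite !mxE !ffunE /X nth_mkseq; last by apply: leq_trans (ltn_ord i0) _; rewrite sX.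
    rewrite ffunE /ent rmorph_prod /=; congr (_ * _); apply: eq_bigr => l _.
    by rewrite rmorphB /= -!pmulrn.
  have : \row_i0 k i0 = 0 by rewrite -(mulmxK uN (\row_i0 k i0)) key mul0mx.
  by move/rowP => /(_ i); rewrite !mxE.
have := dimvS sub; move: fr; rewrite /free => /eqP ->.
by rewrite sX.
Qed.

End Det.

Lemma prod_pos (L : seq nat) : all (fun l => 0 < l) L -> 0 < \prod_(l <- L) l.
Proof.
elim: L => [|l L IH] /=; first by rewrite big_nil.
by case/andP => l0 aL; rewrite big_cons muln_gt0 l0 IH.
Qed.

Lemma logn_prod p (L : seq nat) : prime p -> all (fun l => 0 < l) L ->
  logn p (\prod_(l <- L) l) = \sum_(l <- L) logn p l.
Proof.
move=> pp; elim: L => [|l L IH] /=; first by rewrite !big_nil logn1.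
case/andP => l0 aL; rewrite !big_cons lognM ?IH //.
exact: prod_pos.
Qed.

Lemma abs_ent_diag n (L : seq nat) (A : {set 'I_n}) : `|ent L A A|%N = \prod_(l <- L) l.
Proof.
rewrite /ent setDv cards0.
elim: L => [|l L IH]; first by rewrite !big_nil.
by rewrite !big_cons abszM IH GRing.sub0r abszN.
Qed.

Lemma abs_ent_ge n (L : seq nat) (A B : {set 'I_n}) :
  all (fun l => l <= #|A :\: B|) L ->
  `|ent L A B|%N = \prod_(l <- L) (#|A :\: B| - l).
Proof.
rewrite /ent; elim: L => [|l L IH]; first by rewrite !big_nil.
by case/andP => h1 h2; rewrite !big_cons abszM IH // distnEl.
Qed.

Lemma iota_ord (R : Type) (idx : R) (op : Monoid.law idx) s (f : nat -> R) :
  \big[op/idx]_(i <- iota 0 s) f i = \big[op/idx]_(i < s) f i.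
Proof. by rewrite -(big_mkord xpredT) /index_iota subn0. Qed.

Theorem mainTheorem3 (p k q a d s n : nat) (F : {set {set 'I_n}}) :
  prime p -> 0 < k -> q = p ^ k ->
  0 < a -> 0 < d -> 1 <= s ->
  (forall l, l \in arith_prog a d s -> (1 <= l) && (l <= q - 1)) ->
  mod_L_diff_sperner q (arith_prog a d s) F ->
  \sum_(l <- arith_prog a d s) vp p l <
    maxn ((s - 1) * vp p d + vp p q) (s * vp p d + vp p s`! + 1) ->
  #|F| <= \sum_(0 <= i < s.+1) 'C(n, i).
Proof.
move=> pp k0 qE a0 d0 s1 Lrange sper Vlt.
set L := arith_prog a d s in Lrange sper Vlt.
set V := \sum_(l <- L) vp p l in Vlt.
have sL : size L = s by rewrite /L /arith_prog size_map size_iota.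
have Lpos : all (fun l => 0 < l) L by apply/allP => l /Lrange /andP[].
have VE : V = \sum_(i < s) logn p (a + i * d) by rewrite /V /L /arith_prog big_map iota_ord /vp.
have vq : vp p q = k by rewrite qE /vp pfactorK.
have lastL : a + (s - 1) * d <= q - 1.
  have : a + (s - 1) * d \in L by apply/mapP; exists (s - 1) => //; rewrite mem_iota; lia.
  by move/Lrange => /andP[].
have Lq : forall l, l \in L -> l < q.
  move=> l /Lrange /andP[_ h]; have : 0 < q by rewrite qE expn_gt0 prime_gt0.
  lia.
have hd : forall A, A \in F -> ((p ^ V)%N%:Z %| ent L A A)%Z && ~~ ((p ^ V.+1)%N%:Z %| ent L A A)%Z.
  move=> A _; rewrite /dvdz !unfold_in /= abs_ent_diag.
  have P0 := prod_pos Lpos.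
  rewrite !pfactor_dvdn // logn_prod // /V /vp leqnn /=.
  by rewrite ltnn.
have ho : forall A B, A \in F -> B \in F -> A != B -> ((p ^ V.+1)%N%:Z %| ent L A B)%Z.
  move=> A B AF BF AB.
  have := sper A B AF BF AB; rewrite /in_mod => /hasP [l0 l0L /eqP hm].
  set m0 := #|A :\: B| in hm *.
  case: (boolP (m0 \in L)) => m0L.
    by rewrite /ent (big_rem m0) //= GRing.subrr GRing.mul0r dvdz0.
  have l0q := Lq _ l0L.
  rewrite (modn_small l0q) in hm.
  set t := m0 %/ q.
  have m0E : m0 = t * q + l0 by rewrite /t {1}(divn_eq m0 q) hm.
  have t0 : 0 < t.
    rewrite lt0n; apply/negP => /eqP t0; move: m0L; rewrite m0E t0 mul0n add0n l0L.
    by [].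
  rewrite /dvdz unfold_in /= abs_ent_ge; last first.
    apply/allP => l lL; rewrite -/m0 m0E.
    have := Lq _ lL; have : q <= t * q by rewrite leq_pmull.
    lia.
  case/mapP: l0L => j; rewrite mem_iota add0n => /andP[_ js] l0E.
  rewrite -/m0 /L /arith_prog big_map iota_ord m0E l0E addnC.
  rewrite VE; apply: (core pp k0 qE a0 d0 s1 lastL js t0).
  by rewrite -VE; move: Vlt; rewrite vq /vp.
have := indep_bound pp hd ho; rewrite sL => h.
apply: (leq_trans h); apply: (leq_trans (dim_span _)).
by rewrite size_map -cardE card_small.
Qed.
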